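(* (1) For every $n$, there exists $N$ such that every graph on at least $N$ vertices has a vertex-minor isomorphic to the edgeless graph $\overline{K_n}$ on $n$ vertices. (2) For every $n$, there exists $N$ such that every connected graph having at least $N$ vertices has a vertex-minor isomorphic to $K_n$. (3) For every $n$, there exists $N$ such that every graph having at least $N$ edges has a vertex-minor isomorphic to $K_n$ or to the graph obtained from two disjoint copies of the edgeless graph $\overline{K_n}$ by adding a perfect matching between them (i.e., a perfect matching with $n$ edges, $nK_2$).
   Context: All graphs are simple. A graph $H$ is a vertex-minor of $G$ if $H$ is an induced subgraph of a graph obtained from $G$ by a sequence of local complementations (local complementation at $v$ replaces the subgraph induced on the neighborhood of $v$ by its complement). *)

(* Defs.v *)
From mathcomp Require Import all_boot.
Set Implicit Arguments. Unset Strict Implicit. Unset Printing Implicit Defensive.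

Definition simple_graph (T : finType) (e : rel T) : Prop :=
  symmetric e /\ irreflexive e.

Definition local_compl (T : finType) (e : rel T) (v : T) : rel T :=
  fun x y => if [&& e v x, e v y & x != y] then ~~ e x y else e x y.

Definition local_compls (T : finType) (e : rel T) (s : seq T) : rel T :=
  foldl (@local_compl T) e s.

Definition iso_induced (T T' : finType) (eH : rel T') (eG : rel T) : Prop :=
  exists f : T' -> T, injective f /\ forall x y, eH x y = eG (f x) (f y).

Definition has_vertex_minor (T T' : finType) (eG : rel T) (eH : rel T') : Prop :=
  exists s : seq T, iso_induced eH (local_compls eG s).

Definition connected_graph (T : finType) (e : rel T) : Prop :=
  forall x y : T, connect e x y.

Definition num_edges (T : finType) (e : rel T) : nat :=
  #|[set E : {set T} | [exists u, exists v, (E == [set u; v]) && e u v]]|.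

Definition complete_rel (n : nat) : rel 'I_n := fun i j => i != j.
Definition edgeless_rel (n : nat) : rel 'I_n := fun _ _ => false.
Definition matching_rel (n : nat) : rel ('I_n + 'I_n)%type :=
  fun x y => match x, y with
             | inl i, inr j => i == j
             | inr i, inl j => i == j
             | _, _ => false
             end.

(* Main.v *)
Require Import Defs.
From mathcomp Require Import all_boot zify.
Set Implicit Arguments. Unset Strict Implicit. Unset Printing Implicit Defensive.

Lemma lc_pull (T T' : finType) (f : T' -> T) (finj : injective f) (e' : rel T') (e : rel T) :
  (forall x y, e' x y = e (f x) (f y)) ->
  forall v x y, local_compl e' v x y = local_compl e (f v) (f x) (f y).
Proof. by move=> H v x y; rewrite /local_compl !H (inj_eq finj). Qed.

Lemma lcs_pull (T T' : finType) (f : T' -> T) (finj : injective f) s :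
  forall (e' : rel T') (e : rel T),
  (forall x y, e' x y = e (f x) (f y)) ->
  forall x y, local_compls e' s x y = local_compls e (map f s) (f x) (f y).
Proof.
elim: s => [|v s IH] e' e H x y /=; first by rewrite /local_compls /= H.
rewrite /local_compls /=; apply: IH; exact: lc_pull.
Qed.

Lemma vm_induced (T T' T'' : finType) (f : T' -> T) (finj : injective f) (e : rel T) (e' : rel T') (e'' : rel T'') :
  (forall x y, e' x y = e (f x) (f y)) -> has_vertex_minor e' e'' -> has_vertex_minor e e''.
Proof.
move=> H [s [g [ginj Hg]]]; exists (map f s); exists (f \o g); split.
  exact: inj_comp.
by move=> x y; rewrite Hg /=; apply: lcs_pull.
Qed.

Lemma inj_from_set (T : finType) (C : {set T}) n : n <= #|C| ->
  exists f : 'I_n -> T, injective f /\ forall i, f i \in C.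
Proof.
move=> H; exists (fun i => enum_val (A := C) (widen_ord H i)); split.
  by move=> i j /enum_val_inj /(congr1 val) /= /val_inj.
by move=> i; apply: enum_valP.
Qed.

Lemma card_bigcup_le (T I : finType) (P : {pred I}) (F : I -> {set T}) c :
  (forall i, P i -> #|F i| <= c) -> #|\bigcup_(i in P) F i| <= #|P| * c.
Proof.
move=> H; rewrite -sum_nat_const.
elim/big_rec2: _ => [|i S m Pi IH]; first by rewrite cards0.
apply: leq_trans (leq_card_setU _ _) _; apply: leq_add => //; exact: H.
Qed.

Definition clique (T : finType) (e : rel T) (C : {set T}) :=
  {in C &, forall x y, x != y -> e x y}.
Definition indep (T : finType) (e : rel T) (C : {set T}) :=
  {in C &, forall x y, x != y -> ~~ e x y}.

Lemma ramsey (T : finType) (e : rel T) : symmetric e ->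
  forall a b (A : {set T}), 2 ^ (a + b) <= #|A| ->
  exists C : {set T}, C \subset A /\
    ((a <= #|C| /\ clique e C) \/ (b <= #|C| /\ indep e C)).
Proof.
move=> esym; elim=> [|a IHa] b A.
  move=> _; exists set0; split; first exact: sub0set.
  by left; split=> // x y; rewrite inE.
elim: b A => [|b IHb] A.
  move=> _; exists set0; split; first exact: sub0set.
  by right; split=> // x y; rewrite inE.
move=> HA.
have: 0 < #|A| by apply: leq_trans HA; rewrite expn_gt0.
rewrite card_gt0 => /set0Pn [v vA].
set Nb := (A :\ v) :&: [set x | e v x].
set Nn := (A :\ v) :\: [set x | e v x].
have Hs : #|Nb| + #|Nn| + 1 = #|A| by rewrite /Nb /Nn cardsID (cardsD1 v A) vA addn1.
have Hsub1 : Nb \subset A by apply/subsetP=> x; rewrite !inE => /andP[/andP[]].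
have Hsub2 : Nn \subset A by apply/subsetP=> x; rewrite !inE => /andP[_ /andP[]].
have vNb : v \notin Nb by rewrite !inE eqxx.
have vNn : v \notin Nn by rewrite !inE eqxx /= andbF.
have Hexp : 2 ^ (a.+1 + b.+1) = 2 * 2 ^ (a + b.+1) by rewrite addSn expnS.
have Hexp2 : 2 ^ (a + b.+1) = 2 ^ (a.+1 + b) by rewrite addnS addSn.
case: (leqP (2 ^ (a + b.+1)) #|Nb|) => Hb.
  have [C [CS [[Ca Cc]|[Cb Ci]]]] := IHa b.+1 Nb Hb.
  - exists (v |: C); split.
      by rewrite subUset sub1set vA (subset_trans CS Hsub1).
    left; split.
      by rewrite cardsU1 (contra (fun h => subsetP CS v h) vNb).
    move=> x y; rewrite !inE => /orP[/eqP->|xC] /orP[/eqP->|yC]; rewrite ?eqxx //.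
    + by move=> _; move: (subsetP CS y yC); rewrite !inE => /andP[_].
    + by move=> _; move: (subsetP CS x xC); rewrite !inE esym => /andP[_].
    + exact: Cc.
  - exists C; split; first exact: subset_trans CS Hsub1.
    by right.
have Hn : 2 ^ (a.+1 + b) <= #|Nn| by lia.
have [C [CS [[Ca Cc]|[Cb Ci]]]] := IHb Nn Hn.
- exists C; split; first exact: subset_trans CS Hsub2.
  by left.
- exists (v |: C); split.
    by rewrite subUset sub1set vA (subset_trans CS Hsub2).
  right; split.
    by rewrite cardsU1 (contra (fun h => subsetP CS v h) vNn).
  move=> x y; rewrite !inE => /orP[/eqP->|xC] /orP[/eqP->|yC]; rewrite ?eqxx //.
  + by move=> _; move: (subsetP CS y yC); rewrite !inE => /andP[].
  + by move=> _; move: (subsetP CS x xC); rewrite !inE esym => /andP[].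
  + exact: Ci.
Qed.

Lemma part1 n : exists N : nat,
  forall (T : finType) (e : rel T), simple_graph e -> N <= #|T| ->
    has_vertex_minor e (@edgeless_rel n).
Proof.
exists (2 ^ (n.+1 + n)) => T e [esym eirr] HT.
have HA : 2 ^ (n.+1 + n) <= #|[set: T]| by rewrite cardsT.
have [C [_ [[Ca Cc]|[Cb Ci]]]] := ramsey esym HA.
- have : 0 < #|C| by apply: leq_trans Ca.
  rewrite card_gt0 => /set0Pn [v vC].
  have Hc : n <= #|C :\ v| by move: Ca; rewrite (cardsD1 v C) vC.
  have [f [finj fC]] := inj_from_set Hc.
  exists [:: v]; exists f; split => // i j.
  rewrite /local_compls /= /local_compl /edgeless_rel.
  move: (fC i) (fC j); rewrite !inE => /andP[fiv fiC] /andP[fjv fjC].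
  case: (eqVneq i j) => [->|ij]; first by rewrite eqxx /= !andbF /= eirr.
  have fij : f i != f j by rewrite (inj_eq finj).
  rewrite Cc // 1?eq_sym // Cc // 1?eq_sym // fij /=.
  by rewrite Cc.
- have [f [finj fC]] := inj_from_set Cb.
  exists [::]; exists f; split => // i j.
  rewrite /local_compls /= /edgeless_rel.
  case: (eqVneq i j) => [->|ij]; first by rewrite eirr.
  by symmetry; apply/negbTE; apply: Ci => //; rewrite (inj_eq finj).
Qed.

Lemma star_lemma n (T : finType) (e : rel T) : simple_graph e ->
  forall v, 2 ^ (n + n) <= #|[set x | e v x]| -> has_vertex_minor e (@complete_rel n).
Proof.
move=> [esym eirr] v Hv.
have [C [CS [[Ca Cc]|[Cb Ci]]]] := ramsey esym Hv.
- have [f [finj fC]] := inj_from_set Ca.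
  exists [::]; exists f; split => // i j.
  rewrite /local_compls /= /complete_rel.
  case: (eqVneq i j) => [->|ij]; first by rewrite eirr.
  by rewrite Cc // (inj_eq finj).
- have [f [finj fC]] := inj_from_set Cb.
  exists [:: v]; exists f; split => // i j.
  rewrite /local_compls /= /local_compl /complete_rel.
  have evi : e v (f i) by move: (subsetP CS _ (fC i)); rewrite inE.
  have evj : e v (f j) by move: (subsetP CS _ (fC j)); rewrite inE.
  case: (eqVneq i j) => [->|ij]; first by rewrite eqxx /= !andbF /= eirr.
  have fij : f i != f j by rewrite (inj_eq finj).
  by rewrite evi evj fij /= Ci.
Qed.

Definition nb (T : finType) (e : rel T) (X : {set T}) :=
  \bigcup_(x in X) (x |: [set y | e x y]).

Lemma card_nb (T : finType) (e : rel T) D : (forall x, #|[set y | e x y]| <= D) ->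
  forall X, #|nb e X| <= #|X| * D.+1.
Proof.
move=> Hd X; apply: card_bigcup_le => x _.
by rewrite cardsU1; move: (Hd x); case: (x \in _) => /=; lia.
Qed.

Lemma nb_sub (T : finType) (e : rel T) (X : {set T}) : X \subset nb e X.
Proof. by apply/subsetP=> x xX; apply/bigcupP; exists x => //; rewrite !inE eqxx. Qed.

Lemma in_nb (T : finType) (e : rel T) (X : {set T}) (x y : T) : x \in X -> (y == x) || e x y -> y \in nb e X.
Proof. by move=> xX H; apply/bigcupP; exists x => //; rewrite !inE. Qed.

Definition far (T : finType) (e : rel T) (u w : T) := (u != w) && ~~ e u w.

Lemma far_sym (T : finType) (e : rel T) : symmetric e -> forall u w, far e u w = far e w u.
Proof. by move=> es u w; rewrite /far eq_sym es. Qed.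

Lemma far_out (T : finType) (e : rel T) (X : {set T}) (x y : T) : x \in X -> y \notin nb e X -> far e x y.
Proof.
move=> xX yn; rewrite /far; apply/andP; split.
  by apply/negP=> /eqP exy; rewrite -exy (in_nb xX (y:=x)) ?eqxx in yn.
by apply/negP=> exy; rewrite (in_nb xX (y:=y)) ?exy ?orbT in yn.
Qed.

Lemma greedy (T : finType) (e : rel T) D (x0 : T) : simple_graph e ->
  (forall x, #|[set y | e x y]| <= D) ->
  forall k (U : {set T}), (forall u, u \in U -> exists z, e u z) ->
  k * (2 * D.+1 * D.+1) <= #|U| ->
  exists a b : nat -> T, (forall i, i < k -> e (a i) (b i) /\ a i \in U) /\
    (forall i j, i < k -> j < k -> i != j ->
      [&& far e (a i) (a j), far e (a i) (b j), far e (b i) (a j) & far e (b i) (b j)]).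
Proof.
move=> [esym eirr] Hd; elim=> [|k IH] U HU Hk.
  by exists (fun _ => x0); exists (fun _ => x0).
pose M := 2 * D.+1 * D.+1.
have : 0 < #|U| by apply: leq_trans Hk; rewrite /M; lia.
rewrite card_gt0 => /set0Pn [u uU].
have [z euz] := HU u uU.
pose W := nb e (nb e [set u; z]).
have HW : #|W| <= M.
  apply: leq_trans (card_nb Hd _) _.
  have := card_nb Hd [set u; z]; have := cards2 u z.
  rewrite /M; move: (#|nb e _|) => m; case: (u != z) => /= -> Hm; nia.
pose U' := U :\: W.
have HU' : k * M <= #|U'|.
  have := cardsID W U; have : #|U :&: W| <= #|W| by apply: subset_leq_card; apply: subsetIr.
  rewrite -/U'; move: Hk; rewrite -/M mulSn; lia.
have [a [b [Hab Hfar]]] := IH U' (fun w wU => HU w (subsetP (subsetDl U W) w wU)) HU'.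
have Hkey : forall w, w \in U' -> forall x, x \in [set u; z] ->
    far e x w /\ (forall w', e w w' -> far e x w').
  move=> w; rewrite inE => /andP[wW _] x xX; split.
    apply: far_out xX _; apply: contra wW => H.
    exact: (subsetP (nb_sub e _)).
  move=> w' eww'; apply: far_out xX _; apply: contra wW => H.
  by apply: (in_nb H); rewrite esym eww' orbT.
have uX : u \in [set u; z] by rewrite !inE eqxx.
have zX : z \in [set u; z] by rewrite !inE eqxx orbT.
have Hj : forall j, j < k -> [&& far e u (a j), far e u (b j), far e z (a j) & far e z (b j)].
  move=> j jk; have [eab aU'] := Hab j jk.
  have [h1 h2] := Hkey _ aU' u uX; have [h3 h4] := Hkey _ aU' z zX.
  by rewrite h1 h3 h2 // h4.
exists (fun i => if i is i'.+1 then a i' else u).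
exists (fun i => if i is i'.+1 then b i' else z).
split.
  case=> [|i] /= ik; first by [].
  have [eab aU'] := Hab i ik; split => //.
  exact: (subsetP (subsetDl U W)).
case=> [|i] [|j] //= ik jk ij.
- exact: Hj.
- have := Hj i ik.
  by rewrite !(far_sym esym (a i)) !(far_sym esym (b i)) !(far_sym esym u) !(far_sym esym z); case/and4P => -> -> -> ->.
- exact: Hfar.
Qed.

Lemma num_edges_le (T : finType) (e : rel T) D : (forall x, #|[set y | e x y]| <= D) ->
  num_edges e <= #|[set u | [exists z, e u z]]| * D.
Proof.
move=> Hd; rewrite /num_edges.
apply: leq_trans (card_bigcup_le (F := fun u => [set [set u; v] | v in [set y | e u y]]) _) => //.
  apply: subset_leq_card; apply/subsetP => E; rewrite inE => /existsP [u /existsP [v /andP[/eqP -> euv]]].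
  apply/bigcupP; exists u; first by rewrite inE; apply/existsP; exists v.
  by apply/imsetP; exists v; rewrite // inE.
by move=> u _; apply: leq_trans (leq_imset_card _ _) (Hd u).
Qed.

Lemma part3 n : exists N : nat,
  forall (T : finType) (e : rel T), simple_graph e -> N <= num_edges e ->
    has_vertex_minor e (@complete_rel n) \/ has_vertex_minor e (@matching_rel n).
Proof.
pose D := 2 ^ (n + n).
pose M := 2 * D.+1 * D.+1.
exists (n * M * D).+1 => T e [esym eirr] HN.
case: (boolP [exists v, D <= #|[set x | e v x]|]) => [/existsP [v Hv]|Hno].
  by left; apply: (star_lemma (conj esym eirr) Hv).
right.
have Hd : forall x, #|[set y | e x y]| <= D.
  move=> x; apply: ltnW; rewrite ltnNge; apply: contra Hno => H.
  by apply/existsP; exists x.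
pose U := [set u | [exists z, e u z]].
have HU : n * M <= #|U|.
  have := num_edges_le Hd; rewrite -/U => H.
  have D0 : 0 < D by rewrite expn_gt0.
  rewrite leqNgt; apply/negP => H2.
  have : #|U| * D < n * M * D by rewrite ltn_pmul2r.
  lia.
have : 0 < num_edges e by apply: leq_trans HN.
rewrite /num_edges card_gt0 => /set0Pn [E]; rewrite inE => /existsP [x0 _].
have HU2 : forall u, u \in U -> exists z, e u z by move=> u; rewrite inE => /existsP.
have [a [b [Hab Hfar]]] := greedy x0 (conj esym eirr) Hd HU2 HU.
have eab : forall i j : 'I_n, e (a i) (b j) = (i == j).
  move=> i j; case: (eqVneq i j) => [->|ij]; first by have [] := Hab j (ltn_ord j).
  have := Hfar i j (ltn_ord i) (ltn_ord j) ij.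
  by case/and4P => _ /andP[_ /negbTE] ->.
have eba : forall i j : 'I_n, e (b i) (a j) = (i == j).
  by move=> i j; rewrite esym eab eq_sym.
have eaa : forall i j : 'I_n, e (a i) (a j) = false.
  move=> i j; case: (eqVneq i j) => [->|ij]; first exact: eirr.
  have := Hfar i j (ltn_ord i) (ltn_ord j) ij.
  by case/and4P => /andP[_ /negbTE] ->.
have ebb : forall i j : 'I_n, e (b i) (b j) = false.
  move=> i j; case: (eqVneq i j) => [->|ij]; first exact: eirr.
  have := Hfar i j (ltn_ord i) (ltn_ord j) ij.
  by case/and4P => _ _ _ /andP[_ /negbTE] ->.
have nab : forall i j : 'I_n, a i != b j.
  move=> i j; case: (eqVneq i j) => [->|ij].
    by apply/eqP => h; have [] := Hab j (ltn_ord j); rewrite h eirr.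
  have := Hfar i j (ltn_ord i) (ltn_ord j) ij.
  by case/and4P => _ /andP[-> _].
have ainj : forall i j : 'I_n, a i = a j -> i = j.
  move=> i j h; case: (eqVneq i j) => // ij.
  have := Hfar i j (ltn_ord i) (ltn_ord j) ij.
  by case/and4P => /andP[]; rewrite h eqxx.
have binj : forall i j : 'I_n, b i = b j -> i = j.
  move=> i j h; case: (eqVneq i j) => // ij.
  have := Hfar i j (ltn_ord i) (ltn_ord j) ij.
  by case/and4P => _ _ _ /andP[]; rewrite h eqxx.
exists [::]; exists (fun x : ('I_n + 'I_n)%type => match x with inl i => a (val i) | inr i => b (val i) end); split.
  case=> i [] j /= h.
  - by rewrite (ainj _ _ h).
  - by move: (nab i j); rewrite h eqxx.
  - by move: (nab j i); rewrite h eqxx.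
  - by rewrite (binj _ _ h).
by case=> i [] j; rewrite /local_compls /= ?eaa ?eab ?eba ?ebb.
Qed.

Definition pinv (k i j : nat) : bool :=
  (i != j) && (if maxn i j <= k then (maxn i j %% 2 == k %% 2)
              else if maxn i j == k.+1 then true else maxn i j == (minn i j).+1).

Lemma pstep k x y : (if [&& pinv k k.+1 x, pinv k k.+1 y & x != y] then ~~ pinv k x y else pinv k x y) = pinv k.+1 x y.
Proof. rewrite /pinv; repeat case: ifP; lia. Qed.

Lemma pinv0 i j : pinv 0 i j = (j == i.+1) || (i == j.+1).
Proof. rewrite /pinv; repeat case: ifP; lia. Qed.

Lemma pclique n i j : i < n -> j < n -> pinv (2 * n) (2 * i) (2 * j) = (i != j).
Proof. move=> ? ?; rewrite /pinv; repeat case: ifP; lia. Qed.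

Lemma lcs_path m k : k <= m -> forall x y : 'I_m.+1,
  local_compls (fun x y : 'I_m.+1 => pinv 0 x y) (map (@inord m) (iota 1 k)) x y = pinv k x y.
Proof.
elim: k => [|k IH] km x y; first by [].
rewrite (_ : iota 1 k.+1 = iota 1 k ++ [:: k.+1]); last by rewrite -[k.+1]addn1 iotaD add1n addn1.
rewrite map_cat /local_compls foldl_cat /= -/(local_compls _ _).
rewrite /local_compl !IH ?(ltnW km) // inordK ?add1n ?ltnS //.
exact: pstep.
Qed.

Lemma path_Kn n m : 2 * n <= m ->
  has_vertex_minor (fun x y : 'I_m.+1 => pinv 0 x y) (@complete_rel n).
Proof.
move=> nm; exists (map (@inord m) (iota 1 (2 * n))).
exists (fun i : 'I_n => @inord m (2 * i)); split.
  move=> i j h; have := congr1 (@nat_of_ord _) h; move: (ltn_ord i) (ltn_ord j) => hi hj.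
  rewrite !inordK; try lia.
  by move=> h2; apply: val_inj => /=; lia.
move=> i j; move: (ltn_ord i) (ltn_ord j) => hi hj; rewrite lcs_path // !inordK; try lia.
by rewrite pclique.
Qed.

Fixpoint ball (T : finType) (e : rel T) (x : T) r : {set T} :=
  if r is r'.+1 then nb e (ball e x r') else [set x].

Lemma card_ball (T : finType) (e : rel T) D x : (forall x, #|[set y | e x y]| <= D) ->
  forall r, #|ball e x r| <= D.+1 ^ r.
Proof.
move=> Hd; elim=> [|r IH] /=; first by rewrite cards1.
apply: leq_trans (card_nb Hd _) _; rewrite expnSr; exact: leq_mul.
Qed.

Lemma ball_mono (T : finType) (e : rel T) x a d : ball e x a \subset ball e x (a + d).
Proof.
elim: d => [|d IH]; first by rewrite addn0.
by rewrite addnS; apply: subset_trans IH (nb_sub _ _).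
Qed.

Lemma ball_path (T : finType) (e : rel T) x p : path e x p -> last x p \in ball e x (size p).
Proof.
elim/last_ind: p => [|p z IH]; first by rewrite /= inE.
rewrite rcons_path last_rcons size_rcons => /andP[/IH H ez] /=.
by apply: (in_nb H); rewrite ez orbT.
Qed.

Lemma last_take (T : eqType) (x : T) p i : i <= size p -> last x (take i p) = nth x (x :: p) i.
Proof.
elim: p x i => [|z p IH] x [|i] //= hi.
rewrite IH //; exact: set_nth_default.
Qed.

Lemma path_drop (T : eqType) (e : rel T) x p i : path e x p -> i <= size p ->
  path e x (take i p) /\ path e (nth x (x :: p) i) (drop i p).
Proof.
move=> H hi; move: H; rewrite -{1}(cat_take_drop i p) cat_path last_take //.
by case/andP.
Qed.

Lemma last_drop (T : eqType) (x : T) p i : i <= size p ->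
  last x p = last (nth x (x :: p) i) (drop i p).
Proof. by move=> hi; rewrite -{1}(cat_take_drop i p) last_cat last_take. Qed.

Lemma shortcut (T : eqType) (e : rel T) x p i k r : path e x p -> i <= k -> k <= size p ->
  path e (nth x (x :: p) i) r -> last (nth x (x :: p) i) r = nth x (x :: p) k ->
  let p' := take i p ++ r ++ drop k p in
  [/\ path e x p', last x p' = last x p & size p' = i + size r + (size p - k)].
Proof.
move=> H ik ks Hr Hl /=; have is_ : i <= size p by apply: leq_trans ks.
have [H1 _] := path_drop H is_; have [_ H2] := path_drop H ks.
split.
- by rewrite cat_path last_take // H1 /= cat_path Hr Hl H2.
- by rewrite last_cat last_take // last_cat Hl -last_drop.
- rewrite !size_cat size_take size_drop; case: ltnP => h; lia.
Qed.

Lemma induced_long (T : finType) (e : rel T) L x y : simple_graph e ->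
  connect e x y -> y \notin ball e x L ->
  exists f : 'I_L.+1 -> T, injective f /\ forall i j, e (f i) (f j) = pinv 0 i j.
Proof.
move=> [esym eirr] /connectP [p0 p0path p0last] yn.
pose P k := [exists t : k.-tuple T, path e x t && (last x t == y)].
have exP : exists k, P k.
  by exists (size p0); apply/existsP; exists (in_tuple p0); rewrite p0path -p0last eqxx.
case: (ex_minnP exP) => m /existsP [t /andP [tpath /eqP tlast]] mmin.
pose p := val t.
have sp : size p = m by rewrite size_tuple.
have minp : forall p', path e x p' -> last x p' = y -> m <= size p'.
  move=> p' h1 h2; apply: mmin; apply/existsP; exists (in_tuple p').
  by rewrite h1 h2 eqxx.
have Lm : L < m.
  rewrite ltnNge; apply/negP => h; move: yn.
  have := ball_path tpath; rewrite tlast size_tuple => hb.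
  by have := subsetP (ball_mono e x m (L - m)) _ hb; rewrite subnKC // => ->.
pose q i := nth x (x :: p) i.
have nochord : forall i j, i < j -> j <= m -> e (q i) (q j) -> j = i.+1.
  move=> i j ij jm eij; rewrite -sp in jm.
  have eijp : path e (q i) [:: q j] by rewrite /= eij.
  have [h1 h2 h3] := shortcut (r := [:: q j]) tpath (ltnW ij) jm eijp erefl.
  have := minp _ h1 (etrans h2 tlast); rewrite h3 /= sp; lia.
have nodup : forall i j, i < j -> j <= m -> q i != q j.
  move=> i j ij jm; rewrite -sp in jm; apply/negP => /eqP eq.
  have [h1 h2 h3] := shortcut (r := [::]) tpath (ltnW ij) jm (erefl : path e (q i) [::]) eq.
  have := minp _ h1 (etrans h2 tlast); rewrite h3 /= sp; lia.
have edge : forall i, i < m -> e (q i) (q i.+1).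
  by move=> i im; move/(pathP x): tpath => /(_ i); rewrite sp => /(_ im).
have Eij : forall i j, i <= m -> j <= m -> e (q i) (q j) = pinv 0 i j.
  move=> i j im jm; rewrite pinv0.
  case: (ltngtP i j) => h.
  - case: (eqVneq j i.+1) => [->|ne]; first by rewrite edge ?eqxx //; lia.
    rewrite (_ : _ || _ = false); last by lia.
    apply/negP => eij; move: (nochord i j h jm eij) => h2; by rewrite h2 eqxx in ne.
  - rewrite esym; case: (eqVneq i j.+1) => [->|ne]; first by rewrite edge ?eqxx ?orbT //; lia.
    rewrite (_ : _ || _ = false); last by lia.
    apply/negP => eij; move: (nochord j i h im eij) => h2.
    by rewrite h2 eqxx in ne.
  - by rewrite h eirr; lia.
exists (fun i => q i); split.
  move=> i j /eqP h; apply: val_inj => /=; move: h.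
  move: (ltn_ord i) (ltn_ord j) => hi hj.
  case: (ltngtP i j) => h //.
  - by rewrite (negbTE (nodup i j h _)) //; lia.
  - by rewrite eq_sym (negbTE (nodup j i h _)) //; lia.
move=> i j; move: (ltn_ord i) (ltn_ord j) => hi hj; apply: Eij; lia.
Qed.

Lemma part2 n : exists N : nat,
  forall (T : finType) (e : rel T), simple_graph e -> connected_graph e ->
    N <= #|T| -> has_vertex_minor e (@complete_rel n).
Proof.
pose D := 2 ^ (n + n).
pose L := 2 * n.
exists (D.+1 ^ L).+1 => T e se conn HT.
case: (boolP [exists v, D <= #|[set x | e v x]|]) => [/existsP [v Hv]|Hno].
  exact: (star_lemma se Hv).
have Hd : forall x, #|[set y | e x y]| <= D.
  move=> x; apply: ltnW; rewrite ltnNge; apply: contra Hno => H.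
  by apply/existsP; exists x.
have : 0 < #|[set: T]| by rewrite cardsT; apply: leq_trans HT.
rewrite card_gt0 => /set0Pn [x _].
have : ~~ ([set: T] \subset ball e x L).
  apply/negP => /subset_leq_card; rewrite cardsT => h.
  have := card_ball x Hd L; lia.
case/subsetPn => y _ yn.
have [f [finj Hf]] := induced_long se (conn x y) yn.
apply: (vm_induced finj (e' := fun i j : 'I_L.+1 => pinv 0 i j)).
  by move=> i j; rewrite Hf.
exact: path_Kn.
Qed.

Theorem theorem3p1 :
  (forall n : nat, exists N : nat,
     forall (T : finType) (e : rel T), simple_graph e -> N <= #|T| ->
       has_vertex_minor e (@edgeless_rel n))
  /\
  (forall n : nat, exists N : nat,
     forall (T : finType) (e : rel T), simple_graph e -> connected_graph e ->
       N <= #|T| -> has_vertex_minor e (@complete_rel n))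
  /\
  (forall n : nat, exists N : nat,
     forall (T : finType) (e : rel T), simple_graph e -> N <= num_edges e ->
       has_vertex_minor e (@complete_rel n) \/
       has_vertex_minor e (@matching_rel n)).
Proof. split; [exact: part1 | split; [exact: part2 | exact: part3]]. Qed.
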